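(* Let $Q\subseteq 2^{\mathbb{N}^k}$ be a clopen quantifier. Then the support of $Q$ is definable in $\mathscr{L}_{\omega\omega}(Q)$ (as a subset of $\mathbb{N}^k$).
   Context: A quantifier of type $\langle k\rangle$ on $\mathbb{N}$ is a family $Q$ of subsets of $\mathbb{N}^k$, identified with a subset of $2^{\mathbb{N}^k}$ (product topology). A set $S\subseteq\mathbb{N}^k$ supports $Q$ if for all $A,B\subseteq\mathbb{N}^k$ with $A\cap S=B\cap S$ we have $A\in Q\iff B\in Q$; the support of $Q$ is the unique minimal set supporting $Q$ (it exists for closed $Q$). $\mathscr{L}_{\omega\omega}(Q)$ is first-order logic extended by formulas $Qx\,\varphi(x,y)$ ($x$ a $k$-tuple of variables) with $\mathbb{N}\models Qx\,\varphi(x,b)$ iff $\{a\in\mathbb{N}^k:\mathbb{N}\models\varphi(a,b)\}\in Q$. A set $B\subseteq\mathbb{N}^n$ is definable in $\mathscr{L}_{\omega\omega}(Q)$ if there is a formula $\varphi(x_1,\dots,x_n)$ whose only non-logical symbol is $Q$ such that $b\in B\iff\mathbb{N}\models\varphi(b)$. *)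

(* Defs.v *)
From mathcomp Require Import all_boot.
Set Implicit Arguments. Unset Strict Implicit. Unset Printing Implicit Defensive.

Notation point k := (k.-tuple nat).

Definition quantifier (k : nat) := (point k -> Prop) -> Prop.

(* Product topology on 2^(N^k): Q is open iff each A in Q has a basic
   (cylinder) neighbourhood, determined by finitely many coordinates F,
   contained in Q. *)
Definition qopen (k : nat) (Q : quantifier k) : Prop :=
  forall A, Q A -> exists F : seq (point k),
    forall B, (forall a, a \in F -> (A a <-> B a)) -> Q B.

Definition qclosed (k : nat) (Q : quantifier k) : Prop :=
  qopen (fun A => ~ Q A).

Definition qclopen (k : nat) (Q : quantifier k) : Prop := qopen Q /\ qclosed Q.

Definition supports (k : nat) (Q : quantifier k) (S : point k -> Prop) : Prop :=
  forall A B, (forall a, S a -> (A a <-> B a)) -> (Q A <-> Q B).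

(* S is the support of Q: a supporting set contained in every supporting set
   (hence the unique minimal one). *)
Definition is_support (k : nat) (Q : quantifier k) (S : point k -> Prop) : Prop :=
  supports Q S /\ forall T, supports Q T -> forall a, S a -> T a.

(* Formulas of L_{omega omega}(Q) with no non-logical symbols besides Q.
   Variables are natural numbers. *)
Inductive form (k : nat) : Type :=
| FEq  : nat -> nat -> form k
| FNeg : form k -> form k
| FAnd : form k -> form k -> form k
| FEx  : nat -> form k -> form k
| FQ   : point k -> form k -> form k.   (* Q x_1 ... x_k phi *)

Definition upd (rho : nat -> nat) (x v : nat) : nat -> nat :=
  fun y => if y == x then v else rho y.

(* Updating at a k-tuple of variables xs with values a (first occurrence
   of a variable in xs determines its value). *)
Definition updt (k : nat) (rho : nat -> nat) (xs : point k) (a : point k) : nat -> nat :=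
  fun y => if y \in (xs : seq nat) then nth 0 a (index y xs) else rho y.

Fixpoint sat (k : nat) (Q : quantifier k) (rho : nat -> nat) (phi : form k) : Prop :=
  match phi with
  | FEq x y => rho x = rho y
  | FNeg p => ~ sat Q rho p
  | FAnd p q => sat Q rho p /\ sat Q rho q
  | FEx x p => exists v, sat Q (upd rho x v) p
  | FQ xs p => Q (fun a => sat Q (updt rho xs a) p)
  end.

Definition definable (k n : nat) (Q : quantifier k) (B : point n -> Prop) : Prop :=
  exists phi : form k, forall (b : point n) (rho : nat -> nat),
    (forall i, i < n -> rho i = nth 0 b i) -> (B b <-> sat Q rho phi).

(* Main.v *)
Require Import Defs.
From mathcomp Require Import all_boot.
From Stdlib Require Import Classical ClassicalEpsilon FunctionalExtensionality PropExtensionality.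
Set Implicit Arguments. Unset Strict Implicit. Unset Printing Implicit Defensive.

Definition agree (k n : nat) (A B : point k -> Prop) :=
  forall p : point k, pickle p < n -> (A p <-> B p).

Lemma agree_le k m n (A B : point k -> Prop) : m <= n -> agree n A B -> agree m A B.
Proof. move=> hmn h p hp; apply: h; exact: leq_trans hp hmn. Qed.

Lemma agree_sym k n (A B : point k -> Prop) : agree n A B -> agree n B A.
Proof. move=> h p hp; split=> ?; by apply/(h p hp). Qed.

Lemma agree_trans k n (A B C : point k -> Prop) : agree n A B -> agree n B C -> agree n A C.
Proof. move=> h1 h2 p hp; split=> ?; [apply/(h2 p hp)/(h1 p hp) | apply/(h1 p hp)/(h2 p hp)]; by []. Qed.

Lemma foldr_bound k (F : seq (point k)) a :
  a \in F -> pickle a < foldr (fun x acc => maxn (pickle x).+1 acc) 0 F.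
Proof.
elim: F => //= x F IH; rewrite in_cons => /orP [/eqP ->|/IH h].
  by rewrite leq_max leqnn.
by rewrite leq_max h orbT.
Qed.

Lemma fin_dep k (Q : quantifier k) : qclopen Q ->
  exists n, forall A B, agree n A B -> Q A -> Q B.
Proof.
move=> [Ho Hc]; apply: NNPP => Hn.
pose bad m X := forall n, exists A B, agree m A X /\ agree n A B /\ Q A /\ ~ Q B.
have bad0 : bad 0 (fun _ => False).
  move=> n; apply: NNPP => hn; apply: Hn; exists n => A B hAB QA.
  apply: NNPP => QB; apply: hn; exists A, B; split=> //; by move=> p.
have step : forall m X, bad m X -> exists Y, agree m Y X /\ bad m.+1 Y.
  move=> m X hb; apply: NNPP => hno.
  pose Y (b : Prop) := fun p : point k => if pickle p == m then b else X p.
  have hY : forall b, agree m (Y b) X.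
    by move=> b p hp; rewrite /Y (ltn_eqF hp); split.
  have nb : forall b, exists n, forall A B, agree m.+1 A (Y b) -> agree n A B -> Q A -> Q B.
    move=> b; apply: NNPP => h; apply: hno; exists (Y b); split=> // n.
    apply: NNPP => h2; apply: h; exists n => A B h1 h3 QA; apply: NNPP => QB; apply: h2.
    by exists A, B.
  have [n1 h1] := nb True; have [n2 h2] := nb False.
  have [A [B [hA [hAB [QA QB]]]]] := hb (maxn (maxn n1 n2) m.+1).
  have hAB1 : agree n1 A B by apply: agree_le hAB; rewrite !leq_max leqnn.
  have hAB2 : agree n2 A B by apply: agree_le hAB; rewrite !leq_max leqnn orbT.
  have [hx|hx] := classic (exists p, pickle p = m /\ A p).
  - apply: QB; apply: (h1 A B) => //; move=> p hp; rewrite /Y; case: eqP => e.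
      move: hx => [q [eq Aq]]; have -> : p = q by apply: (pcan_inj pickleK); rewrite e eq.
      by split.
    by apply: hA; rewrite ltn_neqAle -ltnS hp andbT; apply/eqP.
  - apply: QB; apply: (h2 A B) => //; move=> p hp; rewrite /Y; case: eqP => e.
      by split=> // Ap; apply: hx; exists p.
    by apply: hA; rewrite ltn_neqAle -ltnS hp andbT; apply/eqP.
have gex : forall m X, exists Y, bad m X -> agree m Y X /\ bad m.+1 Y.
  move=> m X; have [hb|hb] := classic (bad m X).
    by have [Y hY] := step m X hb; exists Y.
  by exists X.
pose g m X := proj1_sig (constructive_indefinite_description _ (gex m X)).
have hg : forall m X, bad m X -> agree m (g m X) X /\ bad m.+1 (g m X).
  by move=> m X; rewrite /g; case: constructive_indefinite_description.
pose Xs n := iteri n g (fun _ => False).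
have hbad : forall m, bad m (Xs m).
  elim=> [|m IH] //; exact: (hg _ _ IH).2.
have hchain : forall i j, i <= j -> agree i (Xs j) (Xs i).
  move=> i; elim=> [|j IH]; first by rewrite leqn0 => /eqP ->; move=> p.
  rewrite leq_eqVlt => /orP [/eqP ->|]; first by move=> p.
  rewrite ltnS => hij; apply: agree_trans (IH hij).
  apply: agree_le hij _; exact: (hg _ _ (hbad j)).1.
pose L p := Xs (pickle p).+1 p.
have hL : forall m, agree m L (Xs m).
  move=> m p hp; rewrite /L; apply: iff_sym; exact: (hchain _ m hp p (ltnSn _)).
have [QL|QL] := classic (Q L).
- have [F hF] := Ho L QL.
  pose m := foldr (fun x acc => maxn (pickle x).+1 acc) 0 F.
  have [A [B [hA [hAB [QA QB]]]]] := hbad m m.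
  apply: QB; apply: hF => a aF.
  have hm := foldr_bound aF.
  apply: iff_trans (hL m a hm) _; apply: iff_trans (iff_sym (hA a hm)) _; exact: hAB.
- have [F hF] := Hc L QL.
  pose m := foldr (fun x acc => maxn (pickle x).+1 acc) 0 F.
  have [A [B [hA [hAB [QA QB]]]]] := hbad m m.
  apply: (hF A) QA => a aF.
  have hm := foldr_bound aF.
  apply: iff_trans (hL m a hm) _; exact: (iff_sym (hA a hm)).
Qed.

Definition Sdef k (Q : quantifier k) (b : point k) : Prop :=
  exists A B, (forall a, a <> b -> (A a <-> B a)) /\ Q A /\ ~ Q B.

Lemma L0_support k (Q : quantifier k) n :
  (forall A B, agree n A B -> Q A -> Q B) ->
  forall A B, (forall a, a \in pmap unpickle (iota 0 n) -> (A a <-> B a)) -> Q A -> Q B.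
Proof.
move=> h A B hAB; apply: h => p hp; apply: hAB.
rewrite mem_pmap; apply/mapP; exists (pickle p); last by rewrite pickleK.
by rewrite mem_iota.
Qed.

Lemma is_support_S k (Q : quantifier k) (L0 : seq (point k)) :
  (forall A B, (forall a, a \in L0 -> (A a <-> B a)) -> Q A -> Q B) ->
  is_support Q (Sdef Q).
Proof.
move=> hL0.
have full : forall A B, (forall a, A a <-> B a) -> Q A -> Q B.
  by move=> A B h; apply: hL0 => a _.
have single : forall p, ~ Sdef Q p -> forall A B, (forall a, a <> p -> (A a <-> B a)) -> Q A -> Q B.
  move=> p nS A B h QA; apply: NNPP => QB; apply: nS; by exists A, B.
have ind : forall (l : seq (point k)) A B, (forall a, Sdef Q a -> (A a <-> B a)) ->
    (forall a, a \notin l -> (A a <-> B a)) -> Q A -> Q B.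
  elim=> [|x l IH] A B hS hl QA.
    by apply: (full A B) => // a; apply: hl.
  pose C := fun a => if a == x then B a else A a.
  have QC : Q C.
    have [Sx|nSx] := classic (Sdef Q x).
      apply: (full A C) => // a; rewrite /C; case: eqP => [->|_]; [exact: hS | by []].
    apply: (single x nSx A C) => // a ne; rewrite /C; case: eqP => // _.
  apply: (IH C B) => //.
    move=> a Sa; rewrite /C; case: eqP => // _; exact: hS.
  move=> a al; rewrite /C; case: eqP => // /eqP ne.
  by apply: hl; rewrite in_cons negb_or ne.
have supp : supports Q (Sdef Q).
  suff H : forall A B, (forall a, Sdef Q a -> (A a <-> B a)) -> Q A -> Q B.
    move=> A B h; split; first exact: H.
    by apply: H => a Sa; apply: iff_sym; apply: h.
  move=> A B h QA.
  pose B' := fun a => if a \in L0 then B a else A a.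
  apply: (hL0 B') => [a aL|]; first by rewrite /B' aL.
  apply: (ind L0 A B') => //.
    move=> a Sa; rewrite /B'; case: (a \in L0) => //; exact: h.
  by move=> a aL; rewrite /B' (negbTE aL).
split=> // T hT a [A [B [h [QA QB]]]]; apply: NNPP => nT; apply: QB.
by apply/(hT A B) => // x Tx; apply: h => e; apply: nT; rewrite -e.
Qed.

Definition FTrue {k} : form k := FEq k 0 0.
Definition FOr {k} (p q : form k) : form k := FNeg (FAnd (FNeg p) (FNeg q)).
Fixpoint eqvn {k} (n : nat) (f g : nat -> nat) : form k :=
  match n with 0 => FTrue | n'.+1 => FAnd (FEq k (f n') (g n')) (eqvn n' f g) end.
Fixpoint orn {k} (n : nat) (F : nat -> form k) : form k :=
  match n with 0 => FNeg FTrue | n'.+1 => FOr (F n') (orn n' F) end.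
Fixpoint exvars {k} (lo len : nat) (phi : form k) : form k :=
  match len with 0 => phi | len'.+1 => FEx lo (exvars lo.+1 len' phi) end.

Lemma sat_FOr k (Q : quantifier k) rho p q : sat Q rho (FOr p q) <-> sat Q rho p \/ sat Q rho q.
Proof. simpl; tauto. Qed.

Lemma sat_eqvn k (Q : quantifier k) rho n f g :
  sat Q rho (eqvn n f g) <-> forall i, i < n -> rho (f i) = rho (g i).
Proof.
elim: n => [|n IH] /=; first by split=> // _ i.
rewrite IH; split=> [[h1 h2] i|h]; last first.
  by split; [apply: h | move=> i hi; apply: h; apply: ltnW].
by rewrite ltnS leq_eqVlt => /orP [/eqP ->|/h2].
Qed.

Lemma sat_orn k (Q : quantifier k) rho n F :
  sat Q rho (orn n F) <-> exists2 j, j < n & sat Q rho (F j).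
Proof.
elim: n => [|n IH]; first by split=> [/= h|[]]; [exfalso; apply: h|].
rewrite sat_FOr IH; split=> [[h|[j hj h]]|[j]]; first by exists n.
  by exists j => //; apply: ltnW.
rewrite ltnS leq_eqVlt => /orP [/eqP ->|hj h]; first by left.
by right; exists j.
Qed.

Lemma upd_fun (rho h : nat -> nat) lo len v :
  (fun y => if (lo.+1 <= y) && (y < lo.+1 + len) then h y else upd rho lo v y) =
  (fun y => if (lo <= y) && (y < lo + len.+1) then (if y == lo then v else h y) else rho y).
Proof.
apply: functional_extensionality => y; rewrite /upd.
have [->|ne] := eqVneq y lo.
  by rewrite ltnn leqnn addnS ltnS leq_addr.
by rewrite [lo < y]ltn_neqAle eq_sym ne addSn addnS.
Qed.

Lemma sat_exvars k (Q : quantifier k) lo len phi rho :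
  sat Q rho (exvars lo len phi) <->
  exists h : nat -> nat, sat Q (fun y => if (lo <= y) && (y < lo + len) then h y else rho y) phi.
Proof.
elim: len lo rho => [|len IH] lo rho /=.
  split=> [h|[h]]; first by exists rho; rewrite (_ : (fun y => _) = rho) //;
    apply: functional_extensionality => y; rewrite addn0 ltnNge andbN.
  by rewrite (_ : (fun y => _) = rho) //;
    apply: functional_extensionality => y; rewrite addn0 ltnNge andbN.
split=> [[v /IH [h]]|[h hs]].
  by rewrite upd_fun => hs; eexists; exact: hs.
exists (h lo); apply/IH; exists h; rewrite upd_fun.
move: hs; congr (sat Q _ phi); apply: functional_extensionality => y.
by case: ifP => // _; case: eqP => // ->.
Qed.

Lemma tuple_eqP k (c d : point k) :
  (forall i, i < k -> nth 0 c i = nth 0 d i) <-> c = d.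
Proof.
split=> [h|-> //]; apply: val_inj; apply: (eq_from_nth (x0 := 0)); first by rewrite !size_tuple.
by move=> i; rewrite size_tuple => hi; apply: h.
Qed.

Definition xsv k : point k := @Tuple k nat (iota k k) (introT eqP (size_iota k k)).

Lemma updt_in k rho (c : point k) i : i < k -> updt rho (xsv k) c (k + i) = nth 0 c i.
Proof.
move=> hi; rewrite /updt /=.
have -> : k + i \in iota k k by rewrite mem_iota leq_addr ltn_add2l.
by rewrite -{1}(nth_iota 0 k hi) index_uniq ?size_iota ?iota_uniq.
Qed.

Lemma updt_out k rho (c : point k) y : (y < k) || (k + k <= y) -> updt rho (xsv k) c y = rho y.
Proof.
move=> hy; rewrite /updt /= mem_iota.
case/orP: hy => hy; first by rewrite leqNgt hy.
by rewrite ltnNge hy andbF.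
Qed.

Lemma blk_lt j i N k : j < N -> i < k -> j * k + i < N * k.
Proof.
move=> hj hi; apply: (@leq_trans (j.+1 * k)).
  by rewrite mulSn addnC ltn_add2r.
by rewrite leq_mul2r hj orbT.
Qed.

Definition X1 k (M : point k -> Prop) b := fun c => M c /\ c <> b.
Definition X2 k (M : point k -> Prop) b := fun c => M c \/ c = b.
Definition Dd k (Q : quantifier k) b M :=
  (Q (X1 M b) /\ ~ Q (X2 M b)) \/ (Q (X2 M b) /\ ~ Q (X1 M b)).
Definition Mh k N (h : nat -> nat) (c : point k) :=
  exists2 j, j < N & forall i, i < k -> nth 0 c i = h (k + k + (j * k + i)).

Definition phi k N : form k :=
  let xs := xsv k in
  let Peq := eqvn k (fun i => k + i) id in
  let Pin := orn N (fun j => eqvn k (fun i => k + i) (fun i => k + k + (j * k + i))) in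
  let P1 := FAnd Pin (FNeg Peq) in
  let P2 := FOr Pin Peq in
  exvars (k + k) (N * k) (FOr (FAnd (FQ xs P1) (FNeg (FQ xs P2))) (FAnd (FQ xs P2) (FNeg (FQ xs P1)))).

Lemma sat_phi k (Q : quantifier k) N (b : point k) rho :
  (forall i, i < k -> rho i = nth 0 b i) ->
  sat Q rho (phi k N) <-> exists h, Dd Q b (Mh N h).
Proof.
move=> hrho; rewrite /phi sat_exvars.
suff key : forall h, let rho2 := (fun y => if (k + k <= y) && (y < k + k + N * k) then h y else rho y) in
    (fun c => sat Q (updt rho2 (xsv k) c) (FAnd (orn N (fun j => eqvn k (fun i => k + i) (fun i => k + k + (j * k + i)))) (FNeg (eqvn k (fun i => k + i) id)))) = X1 (Mh N h) b /\
    (fun c => sat Q (updt rho2 (xsv k) c) (FOr (orn N (fun j => eqvn k (fun i => k + i) (fun i => k + k + (j * k + i)))) (eqvn k (fun i => k + i) id))) = X2 (Mh N h) b.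
  split=> [[h H]|[h H]]; exists h; have [e1 e2] := key h; move: H;
    rewrite sat_FOr /= e1 e2 /Dd; tauto.
move=> h rho2.
have hPeq : forall c, sat Q (updt rho2 (xsv k) c) (eqvn k (fun i => k + i) id) <-> c = b.
  move=> c; rewrite sat_eqvn -tuple_eqP; split=> H i hi; move: (H i hi);
    rewrite updt_in // updt_out /= ?hi // /rho2 (_ : k + k <= i = false) ?hrho //;
    by apply/negbTE; rewrite -ltnNge; apply: (leq_trans hi); rewrite leq_addr.
have hPin : forall c, sat Q (updt rho2 (xsv k) c) (orn N (fun j => eqvn k (fun i => k + i) (fun i => k + k + (j * k + i)))) <-> Mh N h c.
  move=> c; rewrite sat_orn; split=> [[j hj H]|[j hj H]]; exists j => //;
    [move/sat_eqvn: H => H i hi; move: (H i hi) | apply/sat_eqvn => i hi; move: (H i hi)];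
    rewrite updt_in // updt_out ?leq_addr ?orbT // /rho2 leq_addr /= ltn_add2l blk_lt //.
split; apply: functional_extensionality => c; apply: propositional_extensionality.
  by rewrite /= hPin hPeq.
by rewrite sat_FOr hPin hPeq.
Qed.

Lemma D_S k (Q : quantifier k) b M : Dd Q b M -> Sdef Q b.
Proof.
have ag : forall a, a <> b -> (X1 M b a <-> X2 M b a).
  by move=> a ne; rewrite /X1 /X2; split; [case=> ? _; left | case=> // ?; split].
case=> [[q1 q2]|[q1 q2]].
  by exists (X1 M b), (X2 M b); split=> // a ne; exact: ag.
by exists (X2 M b), (X1 M b); split=> // a ne; exact: iff_sym (ag a ne).
Qed.

Lemma S_D k (Q : quantifier k) (L0 : seq (point k)) :
  (forall A B, (forall a, a \in L0 -> (A a <-> B a)) -> Q A -> Q B) ->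
  forall b, Sdef Q b -> exists h, Dd Q b (Mh (size L0) h).
Proof.
move=> hL0 b [A [B [hAB [QA QB]]]].
pose T j := if j < size L0 then
   (if excluded_middle_informative (A (nth b L0 j)) then nth b L0 j else b) else b.
pose h y := nth 0 (T ((y - (k + k)) %/ k)) ((y - (k + k)) %% k).
pose Xin c := exists2 j, j < size L0 & c = T j.
have eM : Mh (size L0) h = Xin.
  apply: functional_extensionality => c; apply: propositional_extensionality.
  rewrite /Mh /Xin; split=> [[j hj H]|[j hj H]]; exists j => //.
    apply/tuple_eqP => i hi; rewrite H // /h addKn divnMDl ?(leq_ltn_trans _ hi) //.
    by rewrite divn_small // addn0 modnMDl modn_small.
  move=> i hi; rewrite H /h addKn divnMDl ?(leq_ltn_trans _ hi) //.
  by rewrite divn_small // addn0 modnMDl modn_small.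
have hXin : forall c, c \in L0 -> c <> b -> (Xin c <-> A c).
  move=> c cL ne; split=> [[j hj e]|Ac].
    move: ne; rewrite e /T hj; destruct (excluded_middle_informative _) as [a|na].
      by move=> _.
    by move=> /= ne; exfalso; exact: (ne erefl).
  exists (index c L0); first by rewrite index_mem.
  rewrite /T index_mem cL nth_index //.
  by destruct (excluded_middle_informative _).
have full : forall X Y, (forall a, X a <-> Y a) -> Q X -> Q Y.
  by move=> X Y hh; apply: hL0 => a _.
exists h; rewrite eM /Dd.
have [Ab|nAb] := classic (A b).
- have nBb : ~ B b.
    move=> Bb; apply: QB; apply: (full A) => // a.
    by case: (classic (a = b)) => [->|ne]; [split | apply: hAB].
  right; split.
    apply: (hL0 A) => // a aL; rewrite /X2.
    case: (classic (a = b)) => [->|ne]; first by split=> // _; right.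
    by rewrite -(hXin a aL ne); split; [left | case].
  move=> QX1; apply: QB; apply: (hL0 (X1 Xin b)) => // a aL; rewrite /X1.
  case: (classic (a = b)) => [->|ne]; first by split; [case | ].
  rewrite (hXin a aL ne) (hAB a ne); by split; [case | ].
- have Bb : B b.
    apply: NNPP => nBb; apply: QB; apply: (full A) => // a.
    by case: (classic (a = b)) => [->|ne]; [ | apply: hAB].
  left; split.
    apply: (hL0 A) => // a aL; rewrite /X1.
    case: (classic (a = b)) => [->|ne]; first by split=> // [[]].
    by rewrite (hXin a aL ne); split; [ | case].
  move=> QX2; apply: QB; apply: (hL0 (X2 Xin b)) => // a aL; rewrite /X2.
  case: (classic (a = b)) => [->|ne]; first by split=> // _; right.
  rewrite (hXin a aL ne) (hAB a ne); by split; [case | left].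
Qed.

Theorem lemma17 (k : nat) (Q : quantifier k) (HQ : qclopen Q) :
  exists S : point k -> Prop, is_support Q S /\ definable Q S.
Proof.
have [n hn] := fin_dep HQ.
have hL0 := L0_support hn.
exists (Sdef Q); split; first exact: is_support_S hL0.
exists (phi k (size (pmap (@unpickle (point k)) (iota 0 n)))) => b rho hrho.
rewrite (sat_phi _ _ hrho); split; first exact: S_D hL0 b.
by case=> h; apply: D_S.
Qed.
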